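(* For all $|c|>c_0$ there exists $\mu_{per}>0$ such that for all $\mu\in(0,\mu_{per})$: (i) for all $\omega\in\mathbb{R}$ and $s\ge0$, $L_\mu[\omega]$ is a bounded operator from $\mathcal{X}^s$ to itself; (ii) for all $\omega_1,\omega_2\in\mathbb{R}$ and $\mathbf{u}$, $\|[(L_\mu[\omega_1]-L_\mu[\omega_2])\mathbf{u}]\cdot\mathbf{e}_1\|_s\le C|\omega_1-\omega_2|\|\mathbf{u}\|_{s+1}$ and $\|[(L_\mu[\omega_1]-L_\mu[\omega_2])\mathbf{u}]\cdot\mathbf{e}_2\|_s\le C\mu|\omega_1-\omega_2|\|\mathbf{u}\|_{s+1}$; (iii) there exist $\omega_\mu$ and $|\upsilon_\mu|\le1$ such that, with $\Gamma_\mu\boldsymbol\varphi:=c^2\omega_\mu^2\mu\partial_X^2\boldsymbol\varphi+L_\mu[\omega_\mu]I^\mu\boldsymbol\varphi$, one has $\Gamma_\mu\boldsymbol\varphi=0$ with $\boldsymbol\varphi\in\mathcal{X}^s$ if and only if $\boldsymbol\varphi=a\boldsymbol\nu_\mu$ for some $a\in\mathbb{R}$, where $\boldsymbol\nu_\mu(X)=(\upsilon_\mu\cos X,\ \sin X)^T$; (iv) there exists $|z_\mu|\le1$ such that $\Gamma_\mu\boldsymbol\varphi=\mathbf{g}$ has a solution $\boldsymbol\varphi\in\mathcal{X}^{s+2}$ for given $\mathbf{g}\in\mathcal{X}^s$ if and only if $\langle\mathbf{g},\boldsymbol\nu^*_\mu\rangle_0=0$, where $\boldsymbol\nu^*_\mu(X)=(z_\mu\cos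 X,\ \sin X)^T$; also $\Gamma_\mu^\dagger\boldsymbol\nu^*_\mu=0$; (v) if $\Gamma_\mu\boldsymbol\varphi=\mathbf{g}$ and moreover $\langle\boldsymbol\varphi,\boldsymbol\nu^*_\mu\rangle_0=0$, then $\|\boldsymbol\varphi\|_{s+2}\le C\|\mathbf{g}\|_s$, where $C>0$ does not depend on $\mu$, $\boldsymbol\varphi$, $\mathbf{g}$.
   Context: $c_0=\sqrt2$. $S^df(X)=f(X+d)$. For $\omega\in\mathbb{R}$, $A[\omega]=\tfrac12(S^\omega+S^{-\omega})$, $\delta[\omega]=\tfrac12(S^\omega-S^{-\omega})$, and $$L_\mu[\omega]=\begin{pmatrix}-2\delta[\omega]^2(1-\mu A[\omega]^2)&-2\mu A[\omega]\delta[\omega](1-2A[\omega]^2+\mu A[\omega]^2\delta[\omega]^2)\\ 2\mu A[\omega]\delta[\omega]&2(1+\mu A[\omega]^2-\mu^2A[\omega]^2\delta[\omega]^2)\end{pmatrix}.$$ $I^\mu=\mathrm{diag}(\mu,1)$; $\mathbf{e}_1,\mathbf{e}_2$ standard basis. $H^s_{per}$ is the Sobolev space of $2\pi$-periodic functions, $E^s_{per,0}$ its even functions with $\int_{-\pi}^\pi u=0$, $O^s_{per}$ its odd functions; $\mathcal{X}^s=E^s_{per,0}\times O^s_{per}$ with the $H^s_{per}$ norm $\|\cdot\|_s$ (also used for scalar functions) and $\langle\cdot,\cdot\rangle_0$ the $L^2(-\pi,\pi)$ inner product on pairs; $\Gamma_\mu^\dagger$ is the $L^2$ adjoint. Constants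 $C$ are independent of $\mu$ (and of $\omega$). *)

(* Defs.v *)
From Stdlib Require Import Reals.
From Coquelicot Require Import Coquelicot.
Open Scope R_scope.

(* A real 2*pi-periodic (distribution) u is represented by its real Fourier
   coefficients:  u(X) = sum_{k>=0} cc u k * cos(kX) + sc u k * sin(kX).
   (sc u 0 multiplies sin 0 = 0; on the spaces below it is required to be 0.) *)
Record tfun := TF { cc : nat -> R ; sc : nat -> R }.

Definition tzero : tfun := TF (fun _ => 0) (fun _ => 0).
Definition tadd (u v : tfun) : tfun :=
  TF (fun k => cc u k + cc v k) (fun k => sc u k + sc v k).
Definition tscal (r : R) (u : tfun) : tfun :=
  TF (fun k => r * cc u k) (fun k => r * sc u k).
Definition tsub (u v : tfun) : tfun := tadd u (tscal (-1) v).

(* Shift  (S^d u)(X) = u(X + d), computed on the Fourier coefficients. *)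
Definition shift (d : R) (u : tfun) : tfun :=
  TF (fun k => cc u k * cos (INR k * d) + sc u k * sin (INR k * d))
     (fun k => sc u k * cos (INR k * d) - cc u k * sin (INR k * d)).

Definition dX (u : tfun) : tfun :=
  TF (fun k => INR k * sc u k) (fun k => - (INR k * cc u k)).

Definition Aop (w : R) (u : tfun) : tfun :=
  tscal (1/2) (tadd (shift w u) (shift (- w) u)).
Definition Dop (w : R) (u : tfun) : tfun :=
  tscal (1/2) (tsub (shift w u) (shift (- w) u)).

Definition L11 (mu w : R) (u : tfun) : tfun :=
  tscal (-2) (Dop w (Dop w (tsub u (tscal mu (Aop w (Aop w u)))))).
Definition L12 (mu w : R) (u : tfun) : tfun :=
  tscal (-2 * mu) (Aop w (Dop w
    (tadd (tsub u (tscal 2 (Aop w (Aop w u))))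
          (tscal mu (Aop w (Aop w (Dop w (Dop w u)))))))).
Definition L21 (mu w : R) (u : tfun) : tfun :=
  tscal (2 * mu) (Aop w (Dop w u)).
Definition L22 (mu w : R) (u : tfun) : tfun :=
  tscal 2 (tsub (tadd u (tscal mu (Aop w (Aop w u))))
                (tscal (mu ^ 2) (Aop w (Aop w (Dop w (Dop w u)))))).

Definition pfun := (tfun * tfun)%type.
Definition pzero : pfun := (tzero, tzero).
Definition padd (p q : pfun) : pfun := (tadd (fst p) (fst q), tadd (snd p) (snd q)).
Definition pscal (r : R) (p : pfun) : pfun := (tscal r (fst p), tscal r (snd p)).
Definition psub (p q : pfun) : pfun := padd p (pscal (-1) q).

Definition Lmat (mu w : R) (p : pfun) : pfun :=
  (tadd (L11 mu w (fst p)) (L12 mu w (snd p)),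
   tadd (L21 mu w (fst p)) (L22 mu w (snd p))).

Definition Imu (mu : R) (p : pfun) : pfun := (tscal mu (fst p), snd p).

Definition pdX2 (p : pfun) : pfun := (dX (dX (fst p)), dX (dX (snd p))).

Definition Gamma (c mu w : R) (p : pfun) : pfun :=
  padd (pscal (c ^ 2 * w ^ 2 * mu) (pdX2 p)) (Lmat mu w (Imu mu p)).

Definition sob_term (s : R) (u : tfun) (k : nat) : R :=
  Rpower (1 + INR k ^ 2) s * (cc u k ^ 2 + sc u k ^ 2).
Definition Hs (s : R) (u : tfun) : Prop := ex_series (sob_term s u).
Definition nrm (s : R) (u : tfun) : R := sqrt (Series (sob_term s u)).

Definition even (u : tfun) : Prop := forall k, sc u k = 0.
Definition odd (u : tfun) : Prop := (forall k, cc u k = 0) /\ sc u 0 = 0.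
(* int_{-pi}^{pi} u = 2 pi * cc u 0 *)
Definition mean0 (u : tfun) : Prop := cc u 0 = 0.

Definition inX (s : R) (p : pfun) : Prop :=
  even (fst p) /\ mean0 (fst p) /\ odd (snd p) /\ Hs s (fst p) /\ Hs s (snd p).
Definition pnorm (s : R) (p : pfun) : R :=
  sqrt (Series (sob_term s (fst p)) + Series (sob_term s (snd p))).

(* L^2(-pi,pi) inner product (Parseval):
   int_{-pi}^{pi} u v = pi (2 a0 a0' + sum_{k>=1} (a_k a_k' + b_k b_k')) *)
Definition ip (u v : tfun) : R :=
  PI * (2 * cc u 0 * cc v 0 +
        Series (fun k => cc u (S k) * cc v (S k) + sc u (S k) * sc v (S k))).
Definition pip (p q : pfun) : R := ip (fst p) (fst q) + ip (snd p) (snd q).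

(* Gamma^dagger psi = 0 (L^2 adjoint, Gamma with domain X^2 in X^0):
   <Gamma phi, psi>_0 = 0 for every phi in the domain. *)
Definition adjoint_null (G : pfun -> pfun) (psi : pfun) : Prop :=
  forall phi, inX 2 phi -> pip (G phi) psi = 0.

Definition nu (v : R) : pfun :=
  (TF (fun k => if Nat.eqb k 1 then v else 0) (fun _ => 0),
   TF (fun _ => 0) (fun k => if Nat.eqb k 1 then 1 else 0)).

(* Main.v *)
Require Import Defs.
From Stdlib Require Import Reals Lra Psatz.
From Coquelicot Require Import Coquelicot.
From Stdlib Require Import FunctionalExtensionality Classical ClassicalEpsilon.
Open Scope R_scope.

Lemma cc_tadd u v k : cc (tadd u v) k = cc u k + cc v k. Proof. reflexivity. Qed.
Lemma sc_tadd u v k : sc (tadd u v) k = sc u k + sc v k. Proof. reflexivity. Qed.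
Lemma cc_tscal r u k : cc (tscal r u) k = r * cc u k. Proof. reflexivity. Qed.
Lemma sc_tscal r u k : sc (tscal r u) k = r * sc u k. Proof. reflexivity. Qed.
Lemma cc_tsub u v k : cc (tsub u v) k = cc u k - cc v k. Proof. unfold tsub; simpl; ring. Qed.
Lemma sc_tsub u v k : sc (tsub u v) k = sc u k - sc v k. Proof. unfold tsub; simpl; ring. Qed.
Lemma cc_dX u k : cc (dX u) k = INR k * sc u k. Proof. reflexivity. Qed.
Lemma sc_dX u k : sc (dX u) k = - (INR k * cc u k). Proof. reflexivity. Qed.
Lemma cc_A w u k : cc (Aop w u) k = cos (INR k * w) * cc u k.
Proof. unfold Aop; simpl. replace (INR k * - w) with (- (INR k * w)) by ring.
  rewrite cos_neg, sin_neg. field. Qed.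
Lemma sc_A w u k : sc (Aop w u) k = cos (INR k * w) * sc u k.
Proof. unfold Aop; simpl. replace (INR k * - w) with (- (INR k * w)) by ring.
  rewrite cos_neg, sin_neg. field. Qed.
Lemma cc_D w u k : cc (Dop w u) k = sin (INR k * w) * sc u k.
Proof. unfold Dop, tsub; simpl. replace (INR k * - w) with (- (INR k * w)) by ring.
  rewrite cos_neg, sin_neg. field. Qed.
Lemma sc_D w u k : sc (Dop w u) k = - (sin (INR k * w) * cc u k).
Proof. unfold Dop, tsub; simpl. replace (INR k * - w) with (- (INR k * w)) by ring.
  rewrite cos_neg, sin_neg. field. Qed.

Global Hint Rewrite cc_tadd sc_tadd cc_tscal sc_tscal cc_tsub sc_tsub cc_dX sc_dX
  cc_A sc_A cc_D sc_D : coef.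

Lemma fst_padd p q : fst (padd p q) = tadd (fst p) (fst q). Proof. reflexivity. Qed.
Lemma snd_padd p q : snd (padd p q) = tadd (snd p) (snd q). Proof. reflexivity. Qed.
Lemma fst_pscal r p : fst (pscal r p) = tscal r (fst p). Proof. reflexivity. Qed.
Lemma snd_pscal r p : snd (pscal r p) = tscal r (snd p). Proof. reflexivity. Qed.
Lemma fst_psub p q : fst (psub p q) = tsub (fst p) (fst q). Proof. reflexivity. Qed.
Lemma snd_psub p q : snd (psub p q) = tsub (snd p) (snd q). Proof. reflexivity. Qed.
Lemma fst_Lmat mu w p : fst (Lmat mu w p) = tadd (L11 mu w (fst p)) (L12 mu w (snd p)). Proof. reflexivity. Qed.
Lemma snd_Lmat mu w p : snd (Lmat mu w p) = tadd (L21 mu w (fst p)) (L22 mu w (snd p)). Proof. reflexivity. Qed.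
Lemma fst_Imu mu p : fst (Imu mu p) = tscal mu (fst p). Proof. reflexivity. Qed.
Lemma snd_Imu mu p : snd (Imu mu p) = snd p. Proof. reflexivity. Qed.
Lemma fst_pdX2 p : fst (pdX2 p) = dX (dX (fst p)). Proof. reflexivity. Qed.
Lemma snd_pdX2 p : snd (pdX2 p) = dX (dX (snd p)). Proof. reflexivity. Qed.
Lemma fst_Gamma c mu w p : fst (Gamma c mu w p) =
  tadd (tscal (c ^ 2 * w ^ 2 * mu) (dX (dX (fst p)))) (fst (Lmat mu w (Imu mu p))).
Proof. reflexivity. Qed.
Lemma snd_Gamma c mu w p : snd (Gamma c mu w p) =
  tadd (tscal (c ^ 2 * w ^ 2 * mu) (dX (dX (snd p)))) (snd (Lmat mu w (Imu mu p))).
Proof. reflexivity. Qed.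
Lemma cc_L11 mu w u k : cc (L11 mu w u) k =
  -2 * (sin (INR k * w) * (sin (INR k * w) * - (cc u k - mu * (cos (INR k * w) * (cos (INR k * w) * cc u k))))).
Proof. unfold L11. autorewrite with coef. ring. Qed.
Hint Rewrite fst_padd snd_padd fst_pscal snd_pscal fst_psub snd_psub fst_Lmat snd_Lmat
  fst_Imu snd_Imu fst_pdX2 snd_pdX2 fst_Gamma snd_Gamma : coef.

Definition l11 mu C S := 2 * (S * S) * (1 - mu * (C * C)).
Definition l12 mu C S := - (2 * mu * (C * S) * (1 - 2 * (C * C) - mu * ((C * C) * (S * S)))).
Definition l21 mu C S := - (2 * mu * (C * S)).
Definition l22 mu C S := 2 * (1 + mu * (C * C) + mu * mu * ((C * C) * (S * S))).

Definition Ck w k := cos (INR k * w).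
Definition Sk w k := sin (INR k * w).

Definition even' (u : tfun) := forall k, sc u k = 0.
Definition odd' (u : tfun) := forall k, cc u k = 0.

Lemma Lmat_cc1 mu w p k : (forall k, sc (fst p) k = 0) -> (forall k, cc (snd p) k = 0) ->
  cc (fst (Lmat mu w p)) k = l11 mu (Ck w k) (Sk w k) * cc (fst p) k + l12 mu (Ck w k) (Sk w k) * sc (snd p) k.
Proof. intros H1 H2. autorewrite with coef. unfold L11, L12, L21, L22, l11, l12, Ck, Sk. autorewrite with coef.
  rewrite ?H1, ?H2. ring. Qed.
Lemma Lmat_sc1 mu w p k : (forall k, sc (fst p) k = 0) -> (forall k, cc (snd p) k = 0) ->
  sc (fst (Lmat mu w p)) k = 0.
Proof. intros H1 H2. autorewrite with coef. unfold L11, L12, L21, L22. autorewrite with coef.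
  rewrite ?H1, ?H2. ring. Qed.
Lemma Lmat_cc2 mu w p k : (forall k, sc (fst p) k = 0) -> (forall k, cc (snd p) k = 0) ->
  cc (snd (Lmat mu w p)) k = 0.
Proof. intros H1 H2. autorewrite with coef. unfold L11, L12, L21, L22. autorewrite with coef.
  rewrite ?H1, ?H2. ring. Qed.
Lemma Lmat_sc2 mu w p k : (forall k, sc (fst p) k = 0) -> (forall k, cc (snd p) k = 0) ->
  sc (snd (Lmat mu w p)) k = l21 mu (Ck w k) (Sk w k) * cc (fst p) k + l22 mu (Ck w k) (Sk w k) * sc (snd p) k.
Proof. intros H1 H2. autorewrite with coef. unfold L11, L12, L21, L22, l21, l22, Ck, Sk. autorewrite with coef.
  rewrite ?H1, ?H2. ring. Qed.

Lemma Rabs_le_inv x y : Rabs x <= y -> -y <= x <= y.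
Proof. intros H. pose proof (Rle_abs x). pose proof (Rle_abs (-x)). rewrite Rabs_Ropp in H1. lra. Qed.

Lemma trig_facts C S : C*C + S*S = 1 -> 0 <= C*C <= 1 /\ 0 <= S*S <= 1 /\ Rabs C <= 1 /\ Rabs S <= 1
  /\ 0 <= (C*C)*(S*S) <= 1.
Proof. intros H. assert (0 <= C*C) by nra. assert (0 <= S*S) by nra.
  assert (Rabs C <= 1). { apply Rabs_le. nra. }
  assert (Rabs S <= 1). { apply Rabs_le. nra. }
  split; [lra|]. split; [lra|]. split; [lra|]. split; [lra|]. split; nra. Qed.

Lemma bnd_l11 mu C S : 0 < mu <= 1 -> C*C + S*S = 1 -> 0 <= mu * l11 mu C S <= 2 * mu.
Proof. intros Hm H. destruct (trig_facts C S H) as (?&?&?&?&?). unfold l11.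
  assert (0 <= 1 - mu*(C*C) <= 1) by nra.
  assert (0 <= (S*S) * (1 - mu*(C*C)) <= 1) by nra. split; nra. Qed.
Lemma bnd_l22 mu C S : 0 < mu <= 1 -> C*C + S*S = 1 -> 2 <= l22 mu C S <= 2 + 4 * mu.
Proof. intros Hm H. destruct (trig_facts C S H) as (?&?&?&?&?). unfold l22.
  assert (0 <= mu*(C*C) <= mu) by nra.
  assert (0 <= mu * mu * (C*C*(S*S)) <= mu) by nra. split; nra. Qed.
Lemma bnd_l21 mu C S : 0 < mu <= 1 -> C*C + S*S = 1 -> Rabs (l21 mu C S) <= 2 * mu.
Proof. intros Hm H. destruct (trig_facts C S H) as (?&?&?&?&?). unfold l21.
  rewrite Rabs_Ropp, !Rabs_mult. rewrite (Rabs_pos_eq 2) by lra. rewrite (Rabs_pos_eq mu) by lra.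
  assert (0 <= Rabs C) by apply Rabs_pos. assert (0 <= Rabs S) by apply Rabs_pos.
  assert (Rabs C * Rabs S <= 1). { apply Rle_trans with (1*1); [apply Rmult_le_compat; lra | lra]. }
  nra. Qed.
Lemma bnd_l12 mu C S : 0 < mu <= 1 -> C*C + S*S = 1 -> Rabs (l12 mu C S) <= 8 * mu.
Proof. intros Hm H. destruct (trig_facts C S H) as (?&?&?&?&?). unfold l12.
  rewrite Rabs_Ropp, !Rabs_mult. rewrite (Rabs_pos_eq 2) by lra. rewrite (Rabs_pos_eq mu) by lra.
  assert (0 <= Rabs C) by apply Rabs_pos. assert (0 <= Rabs S) by apply Rabs_pos.
  assert (Rabs (1 - 2 * (C * C) - mu * (C * C * (S * S))) <= 4) by (apply Rabs_le; nra).
  assert (0 <= Rabs (1 - 2 * (C * C) - mu * (C * C * (S * S)))) by apply Rabs_pos.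
  assert (Rabs C * Rabs S <= 1). { apply Rle_trans with (1*1); [apply Rmult_le_compat; lra | lra]. }
  assert (Rabs C * Rabs S * Rabs (1 - 2 * (C * C) - mu * (C * C * (S * S))) <= 4).
  { apply Rle_trans with (1*4); [apply Rmult_le_compat; try lra; apply Rmult_le_pos; lra | lra]. }
  nra. Qed.

Lemma coer_abs n2 m11 m12 m21 m22 a b :
  4 <= n2 -> n2 <= Rabs m11 -> n2 / 2 <= Rabs m22 -> Rabs m12 <= 1/10 -> Rabs m21 <= 1/10 ->
  n2 * n2 * (a*a + b*b) <= 8 * ((m11*a + m12*b)^2 + (m21*a+m22*b)^2).
Proof. intros H4 H11 H22 H12 H21.
  set (x := Rabs a). set (y := Rabs b).
  assert (Hx : 0 <= x) by apply Rabs_pos. assert (Hy : 0 <= y) by apply Rabs_pos.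
  assert (G1 : n2 * x - y/10 <= Rabs (m11*a + m12*b)).
  { assert (Rabs (m11*a) <= Rabs (m11*a + m12*b) + Rabs (m12 * b)).
    { replace (m11*a) with ((m11*a + m12*b) + - (m12*b)) at 1 by ring.
      rewrite <- (Rabs_Ropp (m12*b)). apply Rabs_triang. }
    rewrite !Rabs_mult in H. fold x y in H.
    assert (0 <= Rabs m12) by apply Rabs_pos. nra. }
  assert (G2 : n2 / 2 * y - x/10 <= Rabs (m21*a + m22*b)).
  { assert (Rabs (m22*b) <= Rabs (m21*a + m22*b) + Rabs (m21 * a)).
    { replace (m22*b) with ((m21*a + m22*b) + - (m21*a)) at 1 by ring.
      rewrite <- (Rabs_Ropp (m21*a)). apply Rabs_triang. }
    rewrite !Rabs_mult in H. fold x y in H.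
    assert (0 <= Rabs m21) by apply Rabs_pos. nra. }
  assert (Hg1 : 0 <= Rabs (m11*a + m12*b)) by apply Rabs_pos.
  assert (Hg2 : 0 <= Rabs (m21*a + m22*b)) by apply Rabs_pos.
  assert (E1 : (m11*a + m12*b)^2 = Rabs (m11*a + m12*b) * Rabs (m11*a + m12*b)) by (rewrite <- pow2_abs; ring).
  assert (E2 : (m21*a + m22*b)^2 = Rabs (m21*a + m22*b) * Rabs (m21*a + m22*b)) by (rewrite <- pow2_abs; ring).
  assert (Ea : a*a = x*x) by (unfold x; rewrite <- Rabs_mult, Rabs_pos_eq; [ring|nra]).
  assert (Eb : b*b = y*y) by (unfold y; rewrite <- Rabs_mult, Rabs_pos_eq; [ring|nra]).
  set (g1 := Rabs (m11*a + m12*b)) in *. set (g2 := Rabs (m21*a + m22*b)) in *.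
  assert (Hs : 9/10 * n2 * (x + y) <= g1 + 2 * g2) by nra.
  assert (Hg : 0 <= g1 + 2*g2) by nra.
  rewrite E1, E2, Ea, Eb.
  assert (H81 : 81/100 * (n2 * (x+y)) * (n2 * (x+y)) <= (g1 + 2*g2) * (g1 + 2*g2)).
  { assert (0 <= 9/10 * n2 * (x+y)) by nra. nra. }
  assert (C5 : (g1 + 2*g2) * (g1 + 2*g2) <= 5 * (g1*g1 + g2*g2)).
  { pose proof (Rle_0_sqr (2*g1 - g2)) as hh. unfold Rsqr in hh. nra. }
  assert (Cxy : n2*n2*(x*x+y*y) <= (n2*(x+y))*(n2*(x+y))).
  { assert (0 <= n2*n2*(x*y)) by (apply Rmult_le_pos; nra). nra. }
  nra. Qed.
Definition m11 K mu C S n := - K * (n*n) + mu * l11 mu C S.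
Definition m12 mu C S := l12 mu C S.
Definition m21 mu C S := mu * l21 mu C S.
Definition m22 K mu C S n := - K * (n*n) + l22 mu C S.

Lemma mbounds K mu C S n : 0 < mu <= 1/100 -> C*C + S*S = 1 -> 3/2 <= K <= 5/2 ->
  - K * (n*n) <= m11 K mu C S n <= - K*(n*n) + 2/100 /\
  Rabs (m12 mu C S) <= 8/100 /\ Rabs (m21 mu C S) <= 2/10000 /\
  2 - K*(n*n) <= m22 K mu C S n <= 2 - K*(n*n) + 4/100.
Proof. intros Hm H HK. unfold m11, m12, m21, m22.
  pose proof (bnd_l11 mu C S ltac:(lra) H). pose proof (bnd_l22 mu C S ltac:(lra) H).
  pose proof (bnd_l12 mu C S ltac:(lra) H). pose proof (bnd_l21 mu C S ltac:(lra) H).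
  split; [lra|]. split; [lra|]. split; [|lra].
  rewrite Rabs_mult, (Rabs_pos_eq mu) by lra.
  assert (0 <= Rabs (l21 mu C S)) by apply Rabs_pos. nra. Qed.

Lemma coer_k2 K mu C S n a b : 0 < mu <= 1/100 -> C*C + S*S = 1 -> 3/2 <= K <= 5/2 -> 2 <= n ->
  (1 + n*n)^2 * (a*a + b*b) <= 32 * ((m11 K mu C S n * a + m12 mu C S * b)^2 +
                                     (m21 mu C S * a + m22 K mu C S n * b)^2).
Proof. intros Hm H HK Hn.
  destruct (mbounds K mu C S n Hm H HK) as (B1 & B2 & B3 & B4).
  assert (Hn2 : 4 <= n*n) by nra.
  assert (0 <= K * (n*n) - 3/2*(n*n)) by nra.
  pose proof (coer_abs (n*n) (m11 K mu C S n) (m12 mu C S) (m21 mu C S) (m22 K mu C S n) a b Hn2) as CA.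
  assert (n*n <= Rabs (m11 K mu C S n)). { rewrite Rabs_left by lra. lra. }
  assert (n*n/2 <= Rabs (m22 K mu C S n)). { rewrite Rabs_left by lra. lra. }
  assert (HH : n * n * n * n * (a * a + b * b) <= 8 *
    ((m11 K mu C S n * a + m12 mu C S * b) ^ 2 + (m21 mu C S * a + m22 K mu C S n * b) ^ 2))
    by (replace (n*n*n*n) with (n*n*(n*n)) by ring; apply CA; auto; lra).
  assert (0 <= a*a+b*b) by nra.
  assert ((1+n*n)^2 <= 4 * (n*n*n*n)) by nra.
  nra. Qed.

Lemma k1_m11 K mu C S : 0 < mu <= 1/100 -> C*C + S*S = 1 -> 3/2 <= K <= 5/2 ->
  m11 K mu C S 1 <= - 148/100.
Proof. intros Hm H HK. destruct (mbounds K mu C S 1 Hm H HK) as (B1 & _). lra. Qed.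

Definition zf K mu C S := - m21 mu C S / m11 K mu C S 1.
Definition upsf K mu C S := - m12 mu C S / m11 K mu C S 1.

Lemma zf_bound K mu C S : 0 < mu <= 1/100 -> C*C + S*S = 1 -> 3/2 <= K <= 5/2 ->
  Rabs (zf K mu C S) <= 1/1000.
Proof. intros Hm H HK. pose proof (k1_m11 K mu C S Hm H HK).
  destruct (mbounds K mu C S 1 Hm H HK) as (_ & _ & B3 & _).
  unfold zf. unfold Rdiv. rewrite Rabs_mult, Rabs_Ropp, Rabs_inv, (Rabs_left (m11 _ _ _ _ 1)) by lra.
  apply Rle_trans with (2/10000 * / 1.48).
  - apply Rmult_le_compat; try lra. apply Rabs_pos. left; apply Rinv_0_lt_compat; lra.
    apply Rinv_le_contravar; lra.
  - lra. Qed.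

Lemma upsf_bound K mu C S : 0 < mu <= 1/100 -> C*C + S*S = 1 -> 3/2 <= K <= 5/2 ->
  Rabs (upsf K mu C S) <= 1.
Proof. intros Hm H HK. pose proof (k1_m11 K mu C S Hm H HK).
  destruct (mbounds K mu C S 1 Hm H HK) as (_ & B2 & _ & _).
  unfold upsf. unfold Rdiv. rewrite Rabs_mult, Rabs_Ropp, Rabs_inv, (Rabs_left (m11 _ _ _ _ 1)) by lra.
  apply Rle_trans with (8/100 * / 1.48).
  - apply Rmult_le_compat; try lra. apply Rabs_pos. left; apply Rinv_0_lt_compat; lra.
    apply Rinv_le_contravar; lra.
  - lra. Qed.

Lemma coer_k1a K mu C S a b : 0 < mu <= 1/100 -> C*C + S*S = 1 -> 3/2 <= K <= 5/2 ->
  zf K mu C S * a + b = 0 ->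
  (1 + 1*1)^2 * (a*a + b*b) <= 32 * ((m11 K mu C S 1 * a + m12 mu C S * b)^2 +
                                     (m21 mu C S * a + m22 K mu C S 1 * b)^2).
Proof. intros Hm H HK Hz.
  pose proof (k1_m11 K mu C S Hm H HK). pose proof (zf_bound K mu C S Hm H HK).
  destruct (mbounds K mu C S 1 Hm H HK) as (_ & B2 & _ & _).
  set (z := zf K mu C S) in *. assert (b = - z * a) by lra. subst b.
  set (m1 := m11 K mu C S 1) in *. set (m2 := m12 mu C S) in *.
  assert (Hzz : z * z <= 1/100) by (apply Rabs_le_inv in H1; nra).
  assert (Hmz : Rabs (m2 * z) <= 1/100).
  { rewrite Rabs_mult. assert (0 <= Rabs z) by apply Rabs_pos. nra. }
  apply Rabs_le_inv in Hmz.
  assert (E : m1 * a + m2 * (- z * a) = (m1 - m2 * z) * a) by ring. rewrite E.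
  assert (1 <= (m1 - m2*z)*(m1 - m2*z)) by nra.
  assert (0 <= (m21 mu C S * a + m22 K mu C S 1 * (- z * a))^2) by apply pow2_ge_0.
  assert (0 <= a*a) by nra.
  assert (((m1 - m2 * z) * a)^2 = (m1 - m2*z)*(m1-m2*z)*(a*a)) by ring.
  assert (a*a <= (m1 - m2*z)*(m1-m2*z)*(a*a)) by nra.
  assert ((1 + 1*1)^2 * (a * a + - z * a * (- z * a)) = 4 * (a*a) + 4 * (z*z) * (a*a)) by ring.
  assert ((z*z)*(a*a) <= 1/100 * (a*a)) by nra.
  lra. Qed.

Lemma coer_k1b K mu C S a : 0 < mu <= 1/100 -> C*C + S*S = 1 -> 3/2 <= K <= 5/2 ->
  (1 + 1*1)^2 * (a*a + 0*0) <= 32 * ((m11 K mu C S 1 * a + m12 mu C S * 0)^2 +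
                                     (m21 mu C S * a + m22 K mu C S 1 * 0)^2).
Proof. intros Hm H HK.
  pose proof (k1_m11 K mu C S Hm H HK).
  assert (0 <= (m21 mu C S * a + m22 K mu C S 1 * 0)^2) by apply pow2_ge_0.
  assert (0 <= a*a) by nra.
  assert ((m11 K mu C S 1 * a + m12 mu C S * 0)^2 = (m11 K mu C S 1)^2 * (a*a)) by ring.
  assert (2 <= (m11 K mu C S 1)^2) by nra.
  assert (2 * (a*a) <= (m11 K mu C S 1)^2 * (a*a)) by nra.
  lra. Qed.
Definition lip d x1 x2 L B := Rabs (x1 - x2) <= L * d /\ Rabs x1 <= B /\ Rabs x2 <= B.

Lemma lip_mul d x1 x2 L1 B1 y1 y2 L2 B2 : 0 <= d -> lip d x1 x2 L1 B1 -> lip d y1 y2 L2 B2 ->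
  lip d (x1*y1) (x2*y2) (B1*L2 + L1*B2) (B1*B2).
Proof. intros Hd (H1&H2&H3) (H4&H5&H6).
  assert (0 <= Rabs x1) by apply Rabs_pos. assert (0 <= Rabs y2) by apply Rabs_pos.
  assert (0 <= Rabs (x1 - x2)) by apply Rabs_pos. assert (0 <= Rabs (y1 - y2)) by apply Rabs_pos.
  split; [|split].
  - replace (x1*y1 - x2*y2) with (x1*(y1-y2) + (x1-x2)*y2) by ring.
    eapply Rle_trans; [apply Rabs_triang|]. rewrite !Rabs_mult.
    assert (Rabs x1 * Rabs (y1 - y2) <= B1 * (L2 * d)) by (apply Rmult_le_compat; lra).
    assert (Rabs (x1 - x2) * Rabs y2 <= (L1 * d) * B2) by (apply Rmult_le_compat; lra).
    lra.
  - rewrite Rabs_mult. apply Rmult_le_compat; try apply Rabs_pos; lra.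
  - rewrite Rabs_mult. apply Rmult_le_compat; try apply Rabs_pos; lra. Qed.

Lemma lip_add d x1 x2 L1 B1 y1 y2 L2 B2 : lip d x1 x2 L1 B1 -> lip d y1 y2 L2 B2 ->
  lip d (x1+y1) (x2+y2) (L1+L2) (B1+B2).
Proof. intros (H1&H2&H3) (H4&H5&H6). split; [|split].
  - replace (x1+y1 - (x2+y2)) with ((x1-x2) + (y1-y2)) by ring.
    eapply Rle_trans; [apply Rabs_triang|]. lra.
  - eapply Rle_trans; [apply Rabs_triang|]. lra.
  - eapply Rle_trans; [apply Rabs_triang|]. lra. Qed.

Lemma lip_sub d x1 x2 L1 B1 y1 y2 L2 B2 : lip d x1 x2 L1 B1 -> lip d y1 y2 L2 B2 ->
  lip d (x1-y1) (x2-y2) (L1+L2) (B1+B2).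
Proof. intros (H1&H2&H3) (H4&H5&H6). split; [|split].
  - replace (x1-y1 - (x2-y2)) with ((x1-x2) + - (y1-y2)) by ring.
    eapply Rle_trans; [apply Rabs_triang|]. rewrite Rabs_Ropp. lra.
  - unfold Rminus. eapply Rle_trans; [apply Rabs_triang|]. rewrite Rabs_Ropp. lra.
  - unfold Rminus. eapply Rle_trans; [apply Rabs_triang|]. rewrite Rabs_Ropp. lra. Qed.

Lemma lip_opp d x1 x2 L B : lip d x1 x2 L B -> lip d (-x1) (-x2) L B.
Proof. intros (H1&H2&H3). split; [|split]; rewrite ?Rabs_Ropp; auto.
  replace (-x1 - -x2) with (-(x1-x2)) by ring. rewrite Rabs_Ropp; auto. Qed.

Lemma lip_cst d r : 0 <= d -> 0 <= r -> lip d r r 0 r.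
Proof. intros Hd Hr. unfold lip. rewrite Rminus_diag, Rabs_R0, Rabs_pos_eq by lra. lra. Qed.

Lemma lip_weaken d x1 x2 L B L' : lip d x1 x2 L B -> L <= L' -> 0 <= d -> Rabs (x1 - x2) <= L' * d.
Proof. intros (H1&_&_) H2 H3. eapply Rle_trans; [exact H1|]. apply Rmult_le_compat_r; auto. Qed.

Ltac lipt := first [ eassumption
  | apply lip_cst; [assumption | lra]
  | apply lip_cst; [assumption | nra]
  | apply lip_opp; lipt
  | apply lip_add; lipt
  | apply lip_sub; lipt
  | apply lip_mul; [assumption | lipt | lipt] ].

Section LIP.
Variables (d mu C1 S1 C2 S2 : R).
Hypotheses (Hd : 0 <= d) (Hmu : 0 < mu <= 1) (HC : lip d C1 C2 1 1) (HS : lip d S1 S2 1 1).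
Lemma lip_l11 : Rabs (l11 mu C1 S1 - l11 mu C2 S2) <= 32 * d.
Proof. eapply lip_weaken; [unfold l11; lipt | | exact Hd]. nra. Qed.
Lemma lip_l12 : Rabs (l12 mu C1 S1 - l12 mu C2 S2) <= 32 * d.
Proof. eapply lip_weaken; [unfold l12; lipt | | exact Hd]. nra. Qed.
Lemma lip_l21 : Rabs (l21 mu C1 S1 - l21 mu C2 S2) <= 12 * mu * d.
Proof. eapply lip_weaken; [unfold l21; lipt | | exact Hd]. nra. Qed.
Lemma lip_l22 : Rabs (l22 mu C1 S1 - l22 mu C2 S2) <= 12 * mu * d.
Proof. eapply lip_weaken; [unfold l22; lipt | | exact Hd]. nra. Qed.
End LIP.
Definition W (s : R) (k : nat) := Rpower (1 + INR k ^ 2) s.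
Lemma W_pos s k : 0 < W s k.
Proof. unfold W, Rpower. apply exp_pos. Qed.
Lemma base_pos k : 0 < 1 + INR k ^ 2.
Proof. pose proof (pos_INR k). nra. Qed.
Lemma W_plus1 s k : W (s + 1) k = W s k * (1 + INR k * INR k).
Proof. unfold W. rewrite Rpower_plus, Rpower_1 by apply base_pos. f_equal; ring. Qed.
Lemma W_plus2 s k : W (s + 2) k = W s k * ((1 + INR k * INR k) ^ 2).
Proof. unfold W. rewrite Rpower_plus.
  assert (E : Rpower (1 + INR k ^ 2) 2 = (1 + INR k ^ 2) ^ 2).
  { rewrite <- (Rpower_pow 2 (1 + INR k ^ 2)) by apply base_pos. f_equal. }
  rewrite E. f_equal; ring. Qed.
Lemma sob_eq s u k : sob_term s u k = W s k * (cc u k ^ 2 + sc u k ^ 2).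
Proof. reflexivity. Qed.
Lemma sob_nonneg s u k : 0 <= sob_term s u k.
Proof. rewrite sob_eq. apply Rmult_le_pos. left; apply W_pos.
  pose proof (pow2_ge_0 (cc u k)). pose proof (pow2_ge_0 (sc u k)). lra. Qed.

Lemma ex_series_lin (f g : nat -> R) D : ex_series f -> ex_series g -> ex_series (fun k => D * (f k + g k)).
Proof. intros Hf Hg. apply (ex_series_ext (fun n => scal D (plus (f n) (g n)))).
  - intros n. reflexivity.
  - apply (@ex_series_scal_l R_AbsRing R_NormedModule). apply (@ex_series_plus R_AbsRing R_NormedModule); auto. Qed.

Lemma ex_series_cmp (f : nat -> R) (g : nat -> R) : (forall k, 0 <= f k <= g k) -> ex_series g -> ex_series f.
Proof. intros H Hg. apply (ex_series_le f g); auto. intros n. 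
  change (norm (f n)) with (Rabs (f n)). rewrite Rabs_pos_eq; apply H. Qed.

Lemma Hs_bound s1 s2 v q D : 0 <= D -> Hs s2 (fst q) -> Hs s2 (snd q) ->
  (forall k, sob_term s1 v k <= D * (sob_term s2 (fst q) k + sob_term s2 (snd q) k)) -> Hs s1 v.
Proof. intros HD H1 H2 H. unfold Hs. apply (ex_series_cmp _ (fun k => D * (sob_term s2 (fst q) k + sob_term s2 (snd q) k))).
  - intros k; split; [apply sob_nonneg | apply H].
  - apply ex_series_lin; auto. Qed.

Lemma nrm_bound s1 s2 v q D : 0 <= D -> Hs s2 (fst q) -> Hs s2 (snd q) ->
  (forall k, sob_term s1 v k <= D * D * (sob_term s2 (fst q) k + sob_term s2 (snd q) k)) ->
  nrm s1 v <= D * pnorm s2 q.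
Proof. intros HD H1 H2 H. unfold nrm, pnorm.
  assert (Series (sob_term s1 v) <= Series (fun k => D * D * (sob_term s2 (fst q) k + sob_term s2 (snd q) k))).
  { apply Series_le. intros k; split; [apply sob_nonneg | apply H]. apply ex_series_lin; auto. }
  rewrite Series_scal_l, Series_plus in H0 by auto.
  rewrite <- (sqrt_square D) by auto. rewrite <- sqrt_mult_alt by nra.
  apply sqrt_le_1_alt. lra. Qed.

Lemma pnorm_bound s1 s2 p q D : 0 <= D -> Hs s1 (fst p) -> Hs s1 (snd p) -> Hs s2 (fst q) -> Hs s2 (snd q) ->
  (forall k, sob_term s1 (fst p) k + sob_term s1 (snd p) k <= D * D * (sob_term s2 (fst q) k + sob_term s2 (snd q) k)) ->
  pnorm s1 p <= D * pnorm s2 q.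
Proof. intros HD H1 H2 H3 H4 H. unfold pnorm.
  assert (Series (fun k => sob_term s1 (fst p) k + sob_term s1 (snd p) k) <= Series (fun k => D * D * (sob_term s2 (fst q) k + sob_term s2 (snd q) k))).
  { apply Series_le. intros k; split; [| apply H].
    pose proof (sob_nonneg s1 (fst p) k); pose proof (sob_nonneg s1 (snd p) k); lra.
    apply ex_series_lin; auto. }
  rewrite Series_scal_l, !Series_plus in H0 by auto.
  rewrite <- (sqrt_square D) by auto. rewrite <- sqrt_mult_alt by nra.
  apply sqrt_le_1_alt. lra. Qed.

Lemma pfun_ext (p q : pfun) :
  (forall k, cc (fst p) k = cc (fst q) k) -> (forall k, sc (fst p) k = sc (fst q) k) ->
  (forall k, cc (snd p) k = cc (snd q) k) -> (forall k, sc (snd p) k = sc (snd q) k) -> p = q.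
Proof. destruct p as [[a1 b1] [a2 b2]], q as [[c1 d1] [c2 d2]]; simpl. intros H1 H2 H3 H4.
  f_equal; f_equal; apply functional_extensionality; auto. Qed.

Lemma series_delta0 (f : nat -> R) x : (forall k, f (S k) = 0) -> f 0%nat = x -> Series f = x.
Proof. intros H0 Hx. rewrite (Series_ext f (fun k => x * 0 ^ k)).
  - rewrite Series_scal_l. rewrite (is_series_unique _ (/ (1 - 0))). field.
    apply is_series_geom. rewrite Rabs_R0; lra.
  - intros [|k]. simpl. rewrite Hx; ring. rewrite H0. simpl. ring. Qed.

Lemma pip_nu g v : pip g (nu v) = PI * (v * cc (fst g) 1 + sc (snd g) 1).
Proof. unfold pip, ip, nu. simpl.
  rewrite (series_delta0 _ (cc (fst g) 1 * v)), (series_delta0 _ (sc (snd g) 1)).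
  - ring.
  - intros k; simpl. destruct k; simpl; ring.
  - simpl. ring.
  - intros k; simpl. destruct k; simpl; ring.
  - simpl; ring. Qed.

Lemma cos_lip x y : Rabs (cos x - cos y) <= Rabs (x - y).
Proof. destruct (MVT_abs cos (fun t => - sin t) y x) as [t [Ht _]].
  { intros t _. apply derivable_pt_lim_cos. }
  rewrite Ht. rewrite Rabs_Ropp. pose proof (SIN_bound t). assert (Rabs (sin t) <= 1) by (apply Rabs_le; lra).
  pose proof (Rabs_pos (x - y)). nra. Qed.
Lemma sin_lip x y : Rabs (sin x - sin y) <= Rabs (x - y).
Proof. destruct (MVT_abs sin cos y x) as [t [Ht _]].
  { intros t _. apply derivable_pt_lim_sin. }
  rewrite Ht. pose proof (COS_bound t). assert (Rabs (cos t) <= 1) by (apply Rabs_le; lra).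
  pose proof (Rabs_pos (x - y)). nra. Qed.
Lemma bnd_l11' mu C S : 0 < mu <= 1 -> C*C + S*S = 1 -> 0 <= l11 mu C S <= 2.
Proof. intros Hm H. destruct (trig_facts C S H) as (?&?&?&?&?). unfold l11.
  assert (0 <= 1 - mu*(C*C) <= 1) by nra.
  assert (0 <= (S*S) * (1 - mu*(C*C)) <= 1) by nra. split; nra. Qed.

Lemma CS1 w k : Ck w k * Ck w k + Sk w k * Sk w k = 1.
Proof. unfold Ck, Sk. pose proof (sin2_cos2 (INR k * w)). unfold Rsqr in H. lra. Qed.

Lemma row_sq x y a b L : Rabs x <= L -> Rabs y <= L -> (x*a + y*b)^2 <= 2 * (L*L) * (a*a + b*b).
Proof. intros Hx Hy.
  assert (Ex : x*x = Rabs x * Rabs x) by (rewrite <- Rabs_mult; symmetry; apply Rabs_pos_eq; nra).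
  assert (Ey : y*y = Rabs y * Rabs y) by (rewrite <- Rabs_mult; symmetry; apply Rabs_pos_eq; nra).
  pose proof (Rabs_pos x). pose proof (Rabs_pos y).
  assert (x*x <= L*L) by (rewrite Ex; nra).
  assert (y*y <= L*L) by (rewrite Ey; nra).
  pose proof (Rle_0_sqr (x*a - y*b)). unfold Rsqr in *.
  assert (0 <= a*a) by nra. assert (0 <= b*b) by nra.
  assert (x*x*(a*a) <= L*L*(a*a)) by nra. assert (y*y*(b*b) <= L*L*(b*b)) by nra.
  nra. Qed.

Definition M11 c mu w k := m11 (c^2*w^2*mu) mu (Ck w k) (Sk w k) (INR k).
Definition M12 (mu w : R) k := m12 mu (Ck w k) (Sk w k).
Definition M21 (mu w : R) k := m21 mu (Ck w k) (Sk w k).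
Definition M22 c mu w k := m22 (c^2*w^2*mu) mu (Ck w k) (Sk w k) (INR k).

Definition par (p : pfun) := (forall k, sc (fst p) k = 0) /\ (forall k, cc (snd p) k = 0).

Lemma G_cc1 c mu w p k : par p ->
  cc (fst (Gamma c mu w p)) k = M11 c mu w k * cc (fst p) k + M12 mu w k * sc (snd p) k.
Proof. intros [H1 H2]. rewrite fst_Gamma, cc_tadd, cc_tscal, cc_dX, sc_dX.
  rewrite Lmat_cc1. 2: { intros j. rewrite fst_Imu, sc_tscal, H1. ring. }
  2: { intros j. rewrite snd_Imu. auto. }
  rewrite fst_Imu, snd_Imu, cc_tscal. unfold M11, m11, M12, m12. ring. Qed.
Lemma G_sc2 c mu w p k : par p ->
  sc (snd (Gamma c mu w p)) k = M21 mu w k * cc (fst p) k + M22 c mu w k * sc (snd p) k.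
Proof. intros [H1 H2]. rewrite snd_Gamma, sc_tadd, sc_tscal, sc_dX, cc_dX.
  rewrite Lmat_sc2. 2: { intros j. rewrite fst_Imu, sc_tscal, H1. ring. }
  2: { intros j. rewrite snd_Imu. auto. }
  rewrite fst_Imu, snd_Imu, cc_tscal. unfold M21, m21, M22, m22. ring. Qed.
Lemma G_sc1 c mu w p k : par p -> sc (fst (Gamma c mu w p)) k = 0.
Proof. intros [H1 H2]. rewrite fst_Gamma, sc_tadd, sc_tscal, sc_dX, cc_dX, H1.
  rewrite Lmat_sc1. ring. intros j. rewrite fst_Imu, sc_tscal, H1. ring. intros j. rewrite snd_Imu. auto. Qed.
Lemma G_cc2 c mu w p k : par p -> cc (snd (Gamma c mu w p)) k = 0.
Proof. intros [H1 H2]. rewrite snd_Gamma, cc_tadd, cc_tscal, cc_dX, sc_dX, H2.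
  rewrite Lmat_cc2. ring. intros j. rewrite fst_Imu, sc_tscal, H1. ring. intros j. rewrite snd_Imu. auto. Qed.

Lemma sob_fst s p k : par p -> sob_term s (fst p) k = W s k * (cc (fst p) k)^2.
Proof. intros [H1 H2]. rewrite sob_eq, H1. unfold W. ring. Qed.
Lemma sob_snd s p k : par p -> sob_term s (snd p) k = W s k * (sc (snd p) k)^2.
Proof. intros [H1 H2]. rewrite sob_eq, H2. unfold W. ring. Qed.
Lemma sob_ge_fst s u k : W s k * (cc u k)^2 <= sob_term s u k.
Proof. rewrite sob_eq. pose proof (W_pos s k). pose proof (pow2_ge_0 (sc u k)). nra. Qed.
Lemma sob_ge_snd s u k : W s k * (sc u k)^2 <= sob_term s u k.
Proof. rewrite sob_eq. pose proof (W_pos s k). pose proof (pow2_ge_0 (cc u k)). nra. Qed.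

Lemma mode_to_sob s phi g k : par phi ->
  (1 + INR k * INR k)^2 * (cc (fst phi) k * cc (fst phi) k + sc (snd phi) k * sc (snd phi) k)
    <= 32 * ((cc (fst g) k)^2 + (sc (snd g) k)^2) ->
  sob_term (s+2) (fst phi) k + sob_term (s+2) (snd phi) k <= 6 * 6 * (sob_term s (fst g) k + sob_term s (snd g) k).
Proof. intros Hp H. rewrite sob_fst, sob_snd, !W_plus2 by auto.
  pose proof (sob_ge_fst s (fst g) k). pose proof (sob_ge_snd s (snd g) k). pose proof (W_pos s k).
  assert (W s k * ((1 + INR k * INR k)^2 * (cc (fst phi) k * cc (fst phi) k + sc (snd phi) k * sc (snd phi) k))
    <= W s k * (32 * ((cc (fst g) k)^2 + (sc (snd g) k)^2))) by (apply Rmult_le_compat_l; lra).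
  assert (0 <= W s k * (cc (fst g) k)^2 + W s k * (sc (snd g) k)^2).
  { pose proof (pow2_ge_0 (cc (fst g) k)). pose proof (pow2_ge_0 (sc (snd g) k)). nra. }
  nra. Qed.

Lemma INR_ge2 k : (2 <= k)%nat -> 2 <= INR k.
Proof. intros H. apply le_INR in H. simpl in H. lra. Qed.

Section Fixed.
Variables (c mu w : R).
Hypotheses (Hmu : 0 < mu <= 1/100) (HK : 3/2 <= c^2*w^2*mu <= 5/2)
  (Hdet : M11 c mu w 1 * M22 c mu w 1 - M12 mu w 1 * M21 mu w 1 = 0).
Let zz := zf (c^2*w^2*mu) mu (Ck w 1) (Sk w 1).
Let uu := upsf (c^2*w^2*mu) mu (Ck w 1) (Sk w 1).

Lemma M11_1_neg : M11 c mu w 1 <= -148/100.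
Proof. apply k1_m11; auto. apply CS1. Qed.

Lemma mode_all phi : par phi -> cc (fst phi) 0 = 0 -> sc (snd phi) 0 = 0 ->
  (zz * cc (fst phi) 1 + sc (snd phi) 1 = 0 \/ sc (snd phi) 1 = 0) ->
  forall k, (1 + INR k * INR k)^2 * (cc (fst phi) k * cc (fst phi) k + sc (snd phi) k * sc (snd phi) k)
    <= 32 * ((cc (fst (Gamma c mu w phi)) k)^2 + (sc (snd (Gamma c mu w phi)) k)^2).
Proof. intros Hp H0a H0b H1 k. rewrite G_cc1, G_sc2 by auto.
  destruct k as [|[|k]].
  - rewrite H0a, H0b. pose proof (pow2_ge_0 (M11 c mu w 0 * 0 + M12 mu w 0 * 0)).
    pose proof (pow2_ge_0 (M21 mu w 0 * 0 + M22 c mu w 0 * 0)). simpl. nra.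
  - destruct H1 as [H1|H1].
    + apply coer_k1a; auto. apply CS1.
    + rewrite H1. apply coer_k1b; auto. apply CS1.
  - apply coer_k2; auto. apply CS1. apply INR_ge2. lia. Qed.

Lemma det_k2 k : (2 <= k)%nat -> M11 c mu w k * M22 c mu w k - M12 mu w k * M21 mu w k <> 0.
Proof. intros Hk. pose proof (INR_ge2 k Hk).
  destruct (mbounds (c^2*w^2*mu) mu (Ck w k) (Sk w k) (INR k) Hmu (CS1 w k) HK) as (B1&B2&B3&B4).
  unfold M11, M22, M12, M21.
  set (n := INR k) in *. assert (4 <= n*n) by nra.
  set (a := m11 (c ^ 2 * w ^ 2 * mu) mu (Ck w k) (Sk w k) n) in *.
  set (b := m22 (c ^ 2 * w ^ 2 * mu) mu (Ck w k) (Sk w k) n) in *.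
  assert (a <= -5) by nra. assert (b <= -3) by nra.
  assert (HR : Rabs (m12 mu (Ck w k) (Sk w k) * m21 mu (Ck w k) (Sk w k)) <= 1).
  { rewrite Rabs_mult. pose proof (Rabs_pos (m12 mu (Ck w k) (Sk w k))). nra. }
  apply Rabs_le_inv in HR. nra. Qed.
End Fixed.
Definition Pom c mu w := 3/2 <= c^2*w^2*mu <= 5/2 /\
  M11 c mu w 1 * M22 c mu w 1 - M12 mu w 1 * M21 mu w 1 = 0.

Definition fdet c mu w := M11 c mu w 1 * M22 c mu w 1 - M12 mu w 1 * M21 mu w 1.

Lemma prod_small mu w : 0 < mu <= 1/100 -> Rabs (M12 mu w 1 * M21 mu w 1) <= 1/1000.
Proof. intros Hm. destruct (mbounds 2 mu (Ck w 1) (Sk w 1) 1 Hm (CS1 w 1) ltac:(lra)) as (_&B2&B3&_).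
  unfold M12, M21. rewrite Rabs_mult. pose proof (Rabs_pos (m12 mu (Ck w 1) (Sk w 1))).
  pose proof (Rabs_pos (m21 mu (Ck w 1) (Sk w 1))). nra. Qed.

Lemma fdet_lo c mu w : 0 < mu <= 1/100 -> c^2*w^2*mu = 3/2 -> fdet c mu w < 0.
Proof. intros Hm HK. unfold fdet.
  destruct (mbounds (c^2*w^2*mu) mu (Ck w 1) (Sk w 1) (INR 1) Hm (CS1 w 1) ltac:(lra)) as (B1&_&_&B4).
  pose proof (prod_small mu w Hm) as P. apply Rabs_le_inv in P.
  unfold M11, M22. change (INR 1) with 1 in *. rewrite HK in *.
  set (a := m11 (3/2) mu (Ck w 1) (Sk w 1) 1) in *. set (b := m22 (3/2) mu (Ck w 1) (Sk w 1) 1) in *.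
  assert (a <= -1) by lra. assert (1/2 <= b) by lra.
  assert (a * b <= -1/2) by nra. lra. Qed.

Lemma fdet_hi c mu w : 0 < mu <= 1/100 -> c^2*w^2*mu = 5/2 -> 0 < fdet c mu w.
Proof. intros Hm HK. unfold fdet.
  destruct (mbounds (c^2*w^2*mu) mu (Ck w 1) (Sk w 1) (INR 1) Hm (CS1 w 1) ltac:(lra)) as (B1&_&_&B4).
  pose proof (prod_small mu w Hm) as P. apply Rabs_le_inv in P.
  unfold M11, M22. change (INR 1) with 1 in *. rewrite HK in *.
  set (a := m11 (5/2) mu (Ck w 1) (Sk w 1) 1) in *. set (b := m22 (5/2) mu (Ck w 1) (Sk w 1) 1) in *.
  assert (a <= -2) by lra. assert (b <= -4/10) by lra.
  assert (8/10 <= a * b) by nra. lra. Qed.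

Lemma fdet_cont c mu : continuity (fdet c mu).
Proof. unfold fdet, M11, M22, M12, M21, m11, m12, m21, m22, l11, l12, l21, l22, Ck, Sk. reg. Qed.

Lemma om_exists c mu : 2 < c*c -> 0 < mu <= 1/100 -> exists w, Pom c mu w.
Proof. intros Hc Hm.
  set (wl := sqrt (3/2 / (c*c*mu))). set (wh := sqrt (5/2 / (c*c*mu))).
  assert (Hcm : 0 < c*c*mu) by nra.
  assert (El : wl * wl = 3/2 / (c*c*mu)) by (apply sqrt_sqrt; apply Rlt_le, Rdiv_lt_0_compat; lra).
  assert (Eh : wh * wh = 5/2 / (c*c*mu)) by (apply sqrt_sqrt; apply Rlt_le, Rdiv_lt_0_compat; lra).
  assert (Kl : c^2*wl^2*mu = 3/2). { replace (c^2*wl^2*mu) with ((c*c*mu) * (wl*wl)) by ring. rewrite El. field. split; intros E; rewrite E in *; lra. }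
  assert (Kh : c^2*wh^2*mu = 5/2). { replace (c^2*wh^2*mu) with ((c*c*mu) * (wh*wh)) by ring. rewrite Eh. field. split; intros E; rewrite E in *; lra. }
  assert (wl0 : 0 <= wl) by apply sqrt_pos.
  assert (whl : wl < wh).
  { apply sqrt_lt_1. apply Rlt_le, Rdiv_lt_0_compat; lra. apply Rlt_le, Rdiv_lt_0_compat; lra.
    unfold Rdiv. apply Rmult_lt_compat_r. apply Rinv_0_lt_compat; lra. lra. }
  destruct (IVT (fdet c mu) wl wh (fdet_cont c mu) whl (fdet_lo c mu wl Hm Kl) (fdet_hi c mu wh Hm Kh)) as [w [Hw Hf]].
  exists w. split; [|exact Hf].
  assert (wl*wl <= w*w <= wh*wh) by nra.
  replace (c^2*w^2*mu) with ((c*c*mu) * (w*w)) by ring.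
  rewrite <- Kl, <- Kh. replace (c^2*wl^2*mu) with ((c*c*mu) * (wl*wl)) by ring.
  replace (c^2*wh^2*mu) with ((c*c*mu) * (wh*wh)) by ring. nra. Qed.

Lemma my_choice (A B : Type) (Q : A -> B -> Prop) : (forall x, exists y, Q x y) -> exists f, forall x, Q x (f x).
Proof. intros H. exists (fun x => proj1_sig (constructive_indefinite_description _ (H x))).
  intros x. exact (proj2_sig (constructive_indefinite_description _ (H x))). Qed.
Section Fixed2.
Variables (c mu w : R).
Hypotheses (Hmu : 0 < mu <= 1/100) (HK : 3/2 <= c^2*w^2*mu <= 5/2)
  (Hdet : M11 c mu w 1 * M22 c mu w 1 - M12 mu w 1 * M21 mu w 1 = 0).

Lemma M11_1_ne : M11 c mu w 1 <> 0.
Proof. pose proof (M11_1_neg c mu w Hmu HK). lra. Qed.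

Lemma pip_Gamma_zero phi : par phi ->
  pip (Gamma c mu w phi) (nu (zf (c^2*w^2*mu) mu (Ck w 1) (Sk w 1))) = 0.
Proof. intros Hp. rewrite pip_nu, G_cc1, G_sc2 by auto. unfold zf.
  change (m21 mu (Ck w 1) (Sk w 1)) with (M21 mu w 1).
  change (m11 (c ^ 2 * w ^ 2 * mu) mu (Ck w 1) (Sk w 1) 1) with (M11 c mu w 1).
  pose proof M11_1_ne.
  replace (- M21 mu w 1 / M11 c mu w 1 * (M11 c mu w 1 * cc (fst phi) 1 + M12 mu w 1 * sc (snd phi) 1) +
      (M21 mu w 1 * cc (fst phi) 1 + M22 c mu w 1 * sc (snd phi) 1))
    with ((M11 c mu w 1 * M22 c mu w 1 - M12 mu w 1 * M21 mu w 1) * sc (snd phi) 1 / M11 c mu w 1) by (field; auto).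
  rewrite Hdet. unfold Rdiv. ring. Qed.

Lemma kern_k2 phi k : par phi -> (2 <= k)%nat ->
  cc (fst (Gamma c mu w phi)) k = 0 -> sc (snd (Gamma c mu w phi)) k = 0 ->
  cc (fst phi) k = 0 /\ sc (snd phi) k = 0.
Proof. intros Hp Hk E1 E2. rewrite G_cc1 in E1 by auto. rewrite G_sc2 in E2 by auto.
  pose proof (coer_k2 (c^2*w^2*mu) mu (Ck w k) (Sk w k) (INR k) (cc (fst phi) k) (sc (snd phi) k) Hmu (CS1 w k) HK (INR_ge2 k Hk)) as H.
  change (m11 (c ^ 2 * w ^ 2 * mu) mu (Ck w k) (Sk w k) (INR k)) with (M11 c mu w k) in H.
  change (m12 mu (Ck w k) (Sk w k)) with (M12 mu w k) in H.
  change (m21 mu (Ck w k) (Sk w k)) with (M21 mu w k) in H.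
  change (m22 (c ^ 2 * w ^ 2 * mu) mu (Ck w k) (Sk w k) (INR k)) with (M22 c mu w k) in H.
  rewrite E1, E2 in H. pose proof (pos_INR k).
  assert (1 <= (1 + INR k * INR k)^2) by nra.
  set (a := cc (fst phi) k) in *. set (b := sc (snd phi) k) in *.
  assert (a*a + b*b <= 0) by nra. split; nra. Qed.
End Fixed2.
Theorem lemmaB1 (c : R) (hc : Rabs c > sqrt 2) :
  exists mu_per : R, 0 < mu_per /\
  exists (om ups z : R -> R),
  (* (i) *)
  (forall mu, 0 < mu < mu_per -> forall (w s : R), 0 <= s ->
     (forall p q, Lmat mu w (padd p q) = padd (Lmat mu w p) (Lmat mu w q)) /\
     (forall (r : R) p, Lmat mu w (pscal r p) = pscal r (Lmat mu w p)) /\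
     exists C, 0 <= C /\
       forall p, inX s p -> inX s (Lmat mu w p) /\
                 pnorm s (Lmat mu w p) <= C * pnorm s p) /\
  (* (ii) *)
  (forall s, 0 <= s -> exists C, 0 < C /\
     forall mu, 0 < mu < mu_per -> forall (w1 w2 : R) u, inX (s + 1) u ->
       nrm s (fst (psub (Lmat mu w1 u) (Lmat mu w2 u)))
         <= C * Rabs (w1 - w2) * pnorm (s + 1) u /\
       nrm s (snd (psub (Lmat mu w1 u) (Lmat mu w2 u)))
         <= C * mu * Rabs (w1 - w2) * pnorm (s + 1) u) /\
  (* (iii) *)
  (forall mu, 0 < mu < mu_per ->
     Rabs (ups mu) <= 1 /\
     forall s, 0 <= s -> forall phi, inX s phi ->
       (Gamma c mu (om mu) phi = pzero <->
        exists a : R, phi = pscal a (nu (ups mu)))) /\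
  (* (iv) *)
  (forall mu, 0 < mu < mu_per ->
     Rabs (z mu) <= 1 /\
     (forall s, 0 <= s -> forall g, inX s g ->
       ((exists phi, inX (s + 2) phi /\ Gamma c mu (om mu) phi = g) <->
        pip g (nu (z mu)) = 0)) /\
     adjoint_null (Gamma c mu (om mu)) (nu (z mu))) /\
  (* (v) *)
  (forall s, 0 <= s -> exists C, 0 < C /\
     forall mu, 0 < mu < mu_per -> forall phi g,
       inX (s + 2) phi -> inX s g ->
       Gamma c mu (om mu) phi = g ->
       pip phi (nu (z mu)) = 0 ->
       pnorm (s + 2) phi <= C * pnorm s g).
Proof.
  assert (Hc2 : 2 < c*c).
  { pose proof (sqrt_pos 2). pose proof (Rabs_pos c).
    assert (Rabs c * Rabs c > sqrt 2 * sqrt 2) by nra.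
    rewrite sqrt_sqrt in H1 by lra. rewrite <- Rabs_mult, Rabs_pos_eq in H1 by nra. lra. }
  assert (Hex : forall mu, exists w, 0 < mu <= 1/100 -> Pom c mu w).
  { intros mu. destruct (classic (0 < mu <= 1/100)) as [H|H].
    - destruct (om_exists c mu Hc2 H) as [w Hw]. exists w; auto.
    - exists 0. intros; contradiction. }
  destruct (my_choice _ _ _ Hex) as [om Hom].
  exists (1/100). split; [lra|].
  exists om, (fun mu => upsf (c^2*(om mu)^2*mu) mu (Ck (om mu) 1) (Sk (om mu) 1)),
            (fun mu => zf (c^2*(om mu)^2*mu) mu (Ck (om mu) 1) (Sk (om mu) 1)).
  split; [|split; [|split; [|split]]].
  -
    intros mu Hmu w s Hs0. split; [|split].
    + intros p q. apply pfun_ext; intros k; autorewrite with coef; unfold L11, L12, L21, L22; autorewrite with coef; ring.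
    + intros r p. apply pfun_ext; intros k; autorewrite with coef; unfold L11, L12, L21, L22; autorewrite with coef; ring.
    + exists 16. split; [lra|]. intros p Hp.
      destruct Hp as (Ev & M0 & [Od O0] & H1 & H2).
      assert (Hpar : par p) by (split; auto).
      assert (Hm1 : 0 < mu <= 1) by lra.
      assert (Hmode : forall k, sob_term s (fst (Lmat mu w p)) k + sob_term s (snd (Lmat mu w p)) k
                                <= 16*16*(sob_term s (fst p) k + sob_term s (snd p) k)).
      { intros k. rewrite (sob_eq s (fst (Lmat mu w p))), (sob_eq s (snd (Lmat mu w p))).
        rewrite Lmat_cc1, Lmat_sc1, Lmat_cc2, Lmat_sc2 by auto. rewrite sob_fst, sob_snd by auto.
        pose proof (CS1 w k) as HCS.
        pose proof (bnd_l11' mu (Ck w k) (Sk w k) Hm1 HCS).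
        pose proof (bnd_l12 mu (Ck w k) (Sk w k) Hm1 HCS).
        pose proof (bnd_l21 mu (Ck w k) (Sk w k) Hm1 HCS).
        pose proof (bnd_l22 mu (Ck w k) (Sk w k) Hm1 HCS).
        set (a := cc (fst p) k). set (b := sc (snd p) k).
        assert (R1 : (l11 mu (Ck w k) (Sk w k) * a + l12 mu (Ck w k) (Sk w k) * b)^2 <= 2*(8*8)*(a*a+b*b)).
        { apply row_sq. apply Rabs_le; lra. lra. }
        assert (R2 : (l21 mu (Ck w k) (Sk w k) * a + l22 mu (Ck w k) (Sk w k) * b)^2 <= 2*(8*8)*(a*a+b*b)).
        { apply row_sq. lra. apply Rabs_le; lra. }
        pose proof (W_pos s k).
        assert (E : forall x, (x:R)^2 = x*x) by (intros; ring). rewrite !E in *.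
        assert (0 <= a*a) by nra. assert (0 <= b*b) by nra.
        nra. }
      assert (HL1 : Hs s (fst (Lmat mu w p))).
      { apply (Hs_bound s s _ p (16*16)); auto; try lra. intros k. pose proof (Hmode k).
        pose proof (sob_nonneg s (snd (Lmat mu w p)) k). lra. }
      assert (HL2 : Hs s (snd (Lmat mu w p))).
      { apply (Hs_bound s s _ p (16*16)); auto; try lra. intros k. pose proof (Hmode k).
        pose proof (sob_nonneg s (fst (Lmat mu w p)) k). lra. }
      split.
      * split; [intros k; apply Lmat_sc1; auto|].
        split; [unfold mean0; rewrite Lmat_cc1 by auto; rewrite M0, O0; ring|].
        split; [split; [intros k; apply Lmat_cc2; auto| rewrite Lmat_sc2 by auto; rewrite M0, O0; ring]|].
        split; auto.
      * apply pnorm_bound; auto; lra.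

  -
    intros s Hs0. exists 50. split; [lra|]. intros mu Hmu w1 w2 u Hu.
    destruct Hu as (Ev & M0 & [Od O0] & H1 & H2).
    assert (Hpar : par u) by (split; auto).
    assert (Hm1 : 0 < mu <= 1) by lra.
    set (D := Rabs (w1 - w2)). assert (HD : 0 <= D) by apply Rabs_pos.
    assert (Hlip : forall k, lip (INR k * D) (Ck w1 k) (Ck w2 k) 1 1 /\ lip (INR k * D) (Sk w1 k) (Sk w2 k) 1 1).
    { intros k. pose proof (pos_INR k).
      assert (Rabs (INR k * w1 - INR k * w2) = INR k * D).
      { replace (INR k * w1 - INR k * w2) with (INR k * (w1 - w2)) by ring.
        rewrite Rabs_mult, Rabs_pos_eq by lra. reflexivity. }
      unfold Ck, Sk. split; split; [| split | | split].
      - rewrite <- H0, Rmult_1_l. apply cos_lip.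
      - apply Rabs_le; apply COS_bound.
      - apply Rabs_le; apply COS_bound.
      - rewrite <- H0, Rmult_1_l. apply sin_lip.
      - apply Rabs_le; apply SIN_bound.
      - apply Rabs_le; apply SIN_bound. }
    assert (Fin : forall k (E : R) X Y, 0 <= X -> 2 * (X*X) <= Y*Y ->
      E^2 <= 2 * ((X*INR k)*(X*INR k)) * (cc (fst u) k * cc (fst u) k + sc (snd u) k * sc (snd u) k) ->
      W s k * (E^2 + (0 - 0)^2) <= Y*Y * (sob_term (s+1) (fst u) k + sob_term (s+1) (snd u) k)).
    { intros k E X Y HX HXD HE. rewrite sob_fst, sob_snd, W_plus1 by auto.
      pose proof (W_pos s k). pose proof (pos_INR k).
      set (a := cc (fst u) k) in *. set (b := sc (snd u) k) in *. set (n := INR k) in *.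
      assert (0 <= a*a + b*b) by nra.
      assert (E^2 <= Y*Y * (n*n) * (a*a+b*b)).
      { eapply Rle_trans; [exact HE|]. 
        replace (2 * (X * n * (X * n)) * (a * a + b * b)) with ((2 * (X*X)) * ((n*n) * (a*a+b*b))) by ring.
        assert (0 <= n*n*(a*a+b*b)) by nra.
        replace (Y*Y * (n*n) * (a*a+b*b)) with (Y*Y * (n*n*(a*a+b*b))) by ring.
        apply Rmult_le_compat_r; lra. }
      assert (E^2 <= Y*Y * (1 + n*n) * (a*a+b*b)).
      { eapply Rle_trans; [eassumption|]. apply Rmult_le_compat_r; auto. apply Rmult_le_compat_l; nra. }
      replace (W s k * (E ^ 2 + (0 - 0) ^ 2)) with (W s k * E^2) by ring.
      replace (Y * Y * (W s k * (1 + n * n) * a ^ 2 + W s k * (1 + n * n) * b ^ 2))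
        with (W s k * (Y*Y * (1 + n*n) * (a*a+b*b))) by ring.
      apply Rmult_le_compat_l; lra. }
    split.
    + apply (nrm_bound s (s+1) _ u (50 * D)); auto; try lra.
      intros k. rewrite sob_eq, fst_psub, cc_tsub, sc_tsub, !Lmat_cc1, !Lmat_sc1 by auto.
      destruct (Hlip k) as [HC HS].
      pose proof (lip_l11 (INR k * D) mu _ _ _ _ (Rmult_le_pos _ _ (pos_INR k) HD) Hm1 HC HS).
      pose proof (lip_l12 (INR k * D) mu _ _ _ _ (Rmult_le_pos _ _ (pos_INR k) HD) Hm1 HC HS).
      apply (Fin k _ (32 * D) (50 * D)); [lra | nra |].
      set (a := cc (fst u) k). set (b := sc (snd u) k).
      replace (l11 mu (Ck w1 k) (Sk w1 k) * a + l12 mu (Ck w1 k) (Sk w1 k) * b -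
         (l11 mu (Ck w2 k) (Sk w2 k) * a + l12 mu (Ck w2 k) (Sk w2 k) * b))
        with ((l11 mu (Ck w1 k) (Sk w1 k) - l11 mu (Ck w2 k) (Sk w2 k)) * a +
              (l12 mu (Ck w1 k) (Sk w1 k) - l12 mu (Ck w2 k) (Sk w2 k)) * b) by ring.
      apply row_sq; replace (32 * D * INR k) with (32 * (INR k * D)) by ring; auto.
    + apply (nrm_bound s (s+1) _ u (50 * mu * D)); auto; try (apply Rmult_le_pos; lra).
      intros k. rewrite sob_eq, snd_psub, cc_tsub, sc_tsub, !Lmat_cc2, !Lmat_sc2 by auto.
      destruct (Hlip k) as [HC HS].
      pose proof (lip_l21 (INR k * D) mu _ _ _ _ (Rmult_le_pos _ _ (pos_INR k) HD) Hm1 HC HS).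
      pose proof (lip_l22 (INR k * D) mu _ _ _ _ (Rmult_le_pos _ _ (pos_INR k) HD) Hm1 HC HS).
      rewrite (Rplus_comm ((0 - 0) ^ 2)).
      apply (Fin k _ (12 * mu * D) (50 * mu * D)); [apply Rmult_le_pos; lra | nra |].
      set (a := cc (fst u) k). set (b := sc (snd u) k).
      replace (l21 mu (Ck w1 k) (Sk w1 k) * a + l22 mu (Ck w1 k) (Sk w1 k) * b -
         (l21 mu (Ck w2 k) (Sk w2 k) * a + l22 mu (Ck w2 k) (Sk w2 k) * b))
        with ((l21 mu (Ck w1 k) (Sk w1 k) - l21 mu (Ck w2 k) (Sk w2 k)) * a +
              (l22 mu (Ck w1 k) (Sk w1 k) - l22 mu (Ck w2 k) (Sk w2 k)) * b) by ring.
      apply row_sq; replace (12 * mu * D * INR k) with (12 * mu * (INR k * D)) by ring; auto.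

  -
    intros mu Hmu. cbv beta. assert (Hm : 0 < mu <= 1/100) by lra. destruct (Hom mu Hm) as [HK Hdet].
    split; [apply upsf_bound; auto; apply CS1|].
    intros s Hs phi Hphi.
    assert (Hups : upsf (c^2*(om mu)^2*mu) mu (Ck (om mu) 1) (Sk (om mu) 1) = - M12 mu (om mu) 1 / M11 c mu (om mu) 1) by reflexivity.
    rewrite Hups.
    destruct Hphi as (Ev & M0 & [Od O0] & H1 & H2).
    assert (Hp : par phi) by (split; auto).
    pose proof (M11_1_ne c mu (om mu) Hm HK) as Hne.
    set (w := om mu) in *.
    split.
    + intros HG.
      assert (E1 : forall k, cc (fst (Gamma c mu w phi)) k = 0) by (intros k; rewrite HG; reflexivity).
      assert (E2 : forall k, sc (snd (Gamma c mu w phi)) k = 0) by (intros k; rewrite HG; reflexivity).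
      exists (sc (snd phi) 1).
      apply pfun_ext; intros k; simpl.
      * destruct k as [|[|k]]; simpl.
        -- rewrite M0; ring.
        -- pose proof (E1 1%nat) as E. rewrite G_cc1 in E by auto.
           apply (Rmult_eq_reg_l (M11 c mu w 1)); auto.
           replace (M11 c mu w 1 * (sc (snd phi) 1 * (- M12 mu w 1 / M11 c mu w 1))) with (- (M12 mu w 1 * sc (snd phi) 1)) by (field; auto).
           lra.
        -- destruct (kern_k2 c mu w Hm HK phi (S (S k)) Hp ltac:(lia) (E1 _) (E2 _)) as [Z _]. rewrite Z; ring.
      * rewrite Ev; ring.
      * rewrite Od; ring.
      * destruct k as [|[|k]]; simpl.
        -- rewrite O0; ring.
        -- ring.
        -- destruct (kern_k2 c mu w Hm HK phi (S (S k)) Hp ltac:(lia) (E1 _) (E2 _)) as [_ Z]. rewrite Z; ring.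
    + intros [a Ha]. rewrite Ha in Hp |- *.
      apply pfun_ext; intros k.
      * rewrite G_cc1 by auto. simpl. destruct k as [|[|k]]; simpl; try ring.
        field; auto.
      * rewrite G_sc1 by auto. reflexivity.
      * rewrite G_cc2 by auto. reflexivity.
      * rewrite G_sc2 by auto. simpl. destruct k as [|[|k]]; simpl; try ring.
        replace (M21 mu w 1 * (a * (- M12 mu w 1 / M11 c mu w 1)) + M22 c mu w 1 * (a * 1))
          with (a * (M11 c mu w 1 * M22 c mu w 1 - M12 mu w 1 * M21 mu w 1) / M11 c mu w 1) by (field; auto).
        rewrite Hdet. unfold Rdiv. ring.

  -
    intros mu Hmu. cbv beta. assert (Hm : 0 < mu <= 1/100) by lra. destruct (Hom mu Hm) as [HK Hdet].
    pose proof (M11_1_ne c mu (om mu) Hm HK) as Hne.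
    split; [eapply Rle_trans; [apply zf_bound; auto; apply CS1| lra]|]. split.
    + intros s Hs g Hg. split.
      * intros [phi [Hphi HG]]. rewrite <- HG. apply pip_Gamma_zero; auto.
        destruct Hphi as (Ev & _ & [Od _] & _). split; auto.
      * intros Hpip. rewrite pip_nu in Hpip. pose proof PI_RGT_0.
        assert (Hz : zf (c ^ 2 * om mu ^ 2 * mu) mu (Ck (om mu) 1) (Sk (om mu) 1) * cc (fst g) 1 + sc (snd g) 1 = 0).
        { apply Rmult_integral in Hpip. destruct Hpip; [lra|auto]. }
        assert (Hzf : zf (c^2*(om mu)^2*mu) mu (Ck (om mu) 1) (Sk (om mu) 1) = - M21 mu (om mu) 1 / M11 c mu (om mu) 1) by reflexivity.
        rewrite Hzf in Hz.
        set (w := om mu) in *.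
        destruct Hg as (Evg & M0g & [Odg O0g] & H3 & H4).
        set (ga := cc (fst g)). set (gb := sc (snd g)).
        set (Dt := fun k => M11 c mu w k * M22 c mu w k - M12 mu w k * M21 mu w k).
        set (solA := fun k => match k with 0%nat => 0 | 1%nat => ga 1%nat / M11 c mu w 1
                      | _ => (M22 c mu w k * ga k - M12 mu w k * gb k) / Dt k end).
        set (solB := fun k => match k with 0%nat => 0 | 1%nat => 0
                      | _ => (M11 c mu w k * gb k - M21 mu w k * ga k) / Dt k end).
        set (phi := (TF solA (fun _ => 0), TF (fun _ => 0) solB)).
        assert (Hp : par phi) by (split; intros k; reflexivity).
        assert (HG : Gamma c mu w phi = g).
        { apply pfun_ext; intros k.
          - rewrite G_cc1 by auto. simpl. destruct k as [|[|k]]; simpl.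
            + rewrite M0g. ring.
            + fold ga. field; auto.
            + fold ga. unfold solA, solB. pose proof (det_k2 c mu w Hm HK (S (S k)) ltac:(lia)). unfold Dt.
              field; auto.
          - rewrite G_sc1 by auto. rewrite Evg. reflexivity.
          - rewrite G_cc2 by auto. rewrite Odg. reflexivity.
          - rewrite G_sc2 by auto. simpl. destruct k as [|[|k]]; simpl.
            + rewrite O0g. ring.
            + fold gb. fold ga in Hz. fold gb in Hz.
              assert (gb 1%nat = M21 mu w 1 / M11 c mu w 1 * ga 1%nat) .
              { assert (E : M21 mu w 1 / M11 c mu w 1 * ga 1%nat = - (- M21 mu w 1 / M11 c mu w 1 * ga 1%nat)) by (unfold Rdiv; ring). lra. }
              rewrite H0. field; auto.
            + fold gb. unfold solA, solB. pose proof (det_k2 c mu w Hm HK (S (S k)) ltac:(lia)). unfold Dt.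
              field; auto. }
        exists phi. split; [|exact HG].
        assert (Hmode : forall k, sob_term (s+2) (fst phi) k + sob_term (s+2) (snd phi) k <= 6 * 6 * (sob_term s (fst g) k + sob_term s (snd g) k)).
        { intros k. apply mode_to_sob; auto. rewrite <- HG. apply mode_all; auto. }
        split; [intros k; reflexivity|]. split; [reflexivity|]. split; [split; [intros k; reflexivity| reflexivity]|].
        split.
        -- apply (Hs_bound (s+2) s _ g (6*6)); auto; try lra. intros k. pose proof (Hmode k).
           pose proof (sob_nonneg (s+2) (snd phi) k). lra.
        -- apply (Hs_bound (s+2) s _ g (6*6)); auto; try lra. intros k. pose proof (Hmode k).
           pose proof (sob_nonneg (s+2) (fst phi) k). lra.
    + intros phi Hphi. apply pip_Gamma_zero; auto.
      destruct Hphi as (Ev & _ & [Od _] & _). split; auto.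

  -
    intros s Hs. exists 6. split; [lra|]. intros mu Hmu phi g Hphi Hg HG Hpip.
    assert (Hm : 0 < mu <= 1/100) by lra. destruct (Hom mu Hm) as [HK Hdet].
    destruct Hphi as (Ev & M0 & [Od O0] & H1 & H2).
    destruct Hg as (Evg & M0g & [Odg O0g] & H3 & H4).
    assert (Hp : par phi) by (split; auto).
    rewrite pip_nu in Hpip. pose proof PI_RGT_0.
    assert (Hz : zf (c ^ 2 * om mu ^ 2 * mu) mu (Ck (om mu) 1) (Sk (om mu) 1) * cc (fst phi) 1 + sc (snd phi) 1 = 0).
    { apply Rmult_integral in Hpip. destruct Hpip; [lra|auto]. }
    apply (pnorm_bound (s+2) s phi g 6); auto; try lra.
    intros k. apply mode_to_sob; auto. rewrite <- HG. apply mode_all; auto.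
Qed.
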